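(* Let $A \in \{0,1\}^{X\times Y}$ be a combinatorial channel and let $t \in \mathbb{R}^Y$ with $t \ge \mathbf{0}$ and $(At)_x > 0$ for all $x \in X$. Let $d \in \mathbb{R}$ and define $X_- = \{x \in X : (At)_x < d\}$ and $X_0 = \{x \in X : (At)_x = d\}$. Suppose \[ \mathbf{1}_{X_-}^T A t \ \le\ \mathbf{1}^T t \ \le\ (\mathbf{1}_{X_-} + \mathbf{1}_{X_0})^T A t. \] Define $z \in \mathbb{R}^Y$ by \[ z_y = t_y\left(\frac{1}{d} + \sum_{x \in N(y)} \max\left(\frac{1}{(At)_x} - \frac{1}{d},\ 0\right)\right). \] Then $z$ is feasible for $\kappa^*(A)$ (i.e. $z \ge \mathbf{0}$ and $Az \ge \mathbf{1}$), $p^*_{\textsc{dsu}}(A,t) = \mathbf{1}^T z$, and $\varphi_A(t) \le z$ entrywise. Consequently $\kappa^*_{\textsc{ldu}}(A,t) \le p^*_{\textsc{dsu}}(A,t)$.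
   Context: A combinatorial channel is a matrix $A \in \{0,1\}^{X\times Y}$ ($X,Y$ finite) in which every row and column contains a $1$. For $y \in Y$, $N(y) = \{x : A_{x,y}=1\}$. For $S \subseteq X$, $\mathbf{1}_S$ is its indicator vector. $\kappa^*(A) = \min\{\mathbf{1}^T z : z\ge \mathbf{0},\ Az \ge \mathbf{1}\}$. The degree sequence bound is $p^*_{\textsc{dsu}}(A,t) = \max\{\mathbf{1}^T w : w \in \mathbb{R}^X,\ \mathbf{0} \le w \le \mathbf{1},\ t^T A^T w \le t^T \mathbf{1}\}$. For $t$ with $At > \mathbf{0}$, $\varphi_A(t)_y = t_y / \min_{x \in N(y)} (At)_x$, and the local degree upper bound is $\kappa^*_{\textsc{ldu}}(A,t) = \mathbf{1}^T \varphi_A(t)$. *)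

(* Defs.v *)
From HB Require Import structures.
From mathcomp Require Import all_boot all_order all_algebra.
From mathcomp Require Import classical_sets reals.
Set Implicit Arguments. Unset Strict Implicit. Unset Printing Implicit Defensive.
Import Order.TTheory GRing.Theory Num.Theory.
Local Open Scope ring_scope.
Local Open Scope classical_set_scope.

Section Channel.
Variables (R : realType) (X Y : finType).

Definition is_channel (A : X -> Y -> bool) : Prop :=
  (forall x, exists y, A x y) /\ (forall y, exists x, A x y).

Definition Amul (A : X -> Y -> bool) (t : Y -> R) (x : X) : R :=
  \sum_(y : Y) (A x y)%:R * t y.

Definition Nbr (A : X -> Y -> bool) (y : Y) : set X := [set x | A x y].

Definition kappa_feasible (A : X -> Y -> bool) (z : Y -> R) : Prop :=
  (forall y, 0 <= z y) /\ (forall x, 1 <= Amul A z x).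

Definition dsu_feasible (A : X -> Y -> bool) (t : Y -> R) (w : X -> R) : Prop :=
  (forall x, 0 <= w x <= 1) /\
  \sum_(x : X) w x * Amul A t x <= \sum_(y : Y) t y.

Definition p_dsu (A : X -> Y -> bool) (t : Y -> R) : R :=
  sup [set \sum_(x : X) w x | w in dsu_feasible A t].

Definition phi (A : X -> Y -> bool) (t : Y -> R) (y : Y) : R :=
  t y / inf [set Amul A t x | x in Nbr A y].

Definition kappa_ldu (A : X -> Y -> bool) (t : Y -> R) : R :=
  \sum_(y : Y) phi A t y.

End Channel.

(* Main.v *)
Require Import Defs.
From HB Require Import structures.
From mathcomp Require Import all_boot all_order all_algebra.
From mathcomp Require Import classical_sets reals.
From mathcomp Require Import ring lra.
Import Order.TTheory GRing.Theory Num.Theory.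
Local Open Scope ring_scope.

Lemma argmin_ex (R : realType) (X : finType) (P : pred X) (f : X -> R) x1 :
  P x1 -> exists2 x0, P x0 & forall x, P x -> f x0 <= f x.
Proof.
move=> Px1; case: (arg_minP f Px1) => x0 Px0 H.
by exists x0 => // x Px; apply: H.
Qed.

Lemma sup_eqV (R : realType) (S : set R) (V : R) :
  S V -> (forall s, S s -> s <= V) -> sup S = V.
Proof.
move=> SV ub; apply/le_anti/andP; split.
  by apply: ge_sup; [exists V | exact: ub].
by apply: ub_le_sup => //; exists V.
Qed.

Lemma term_bound (R : realType) (w a d : R) :
  0 < d -> 0 <= w <= 1 -> w <= w * a / d + ((a < d)%R)%:R * (1 - a / d).
Proof.
move=> d0 /andP[w0 w1]; rewrite -mulrA.
case: (boolP (a < d)) => h.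
  have q1 : a / d < 1 by rewrite ltr_pdivrMr // mul1r.
  rewrite mul1r; nra.
have q1 : 1 <= a / d by rewrite ler_pdivlMr // mul1r leNgt.
rewrite mul0r addr0; nra.
Qed.

Lemma u_bound (R : realType) (a d : R) :
  a^-1 <= d^-1 + Num.max (a^-1 - d^-1) 0.
Proof.
have : a^-1 - d^-1 <= Num.max (a^-1 - d^-1) 0 by rewrite le_max lexx.
lra.
Qed.

Lemma ua_eq (R : realType) (a d : R) : 0 < a -> 0 < d ->
  Num.max (a^-1 - d^-1) 0 * a = ((a < d)%R)%:R * (1 - a / d).
Proof.
move=> a0 d0; case: (boolP (a < d)) => h.
  rewrite max_l; last by rewrite subr_ge0 lef_pV2 ?posrE // ltW.
  rewrite mul1r mulrBl mulVf ?gt_eqF // mulrC //.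
rewrite max_r; last by rewrite subr_le0 lef_pV2 ?posrE // leNgt.
by rewrite !mul0r.
Qed.

Theorem theorem4 (R : realType) (X Y : finType) (A : X -> Y -> bool)
  (t : Y -> R) (d : R) :
  is_channel A ->
  (forall y, 0 <= t y) ->
  (forall x, 0 < Amul A t x) ->
  let Xm := [set x : X | Amul A t x < d] in
  let X0 := [set x : X | Amul A t x == d] in
  \sum_(x in Xm) Amul A t x <= \sum_(y : Y) t y <=
    \sum_(x in Xm) Amul A t x + \sum_(x in X0) Amul A t x ->
  let z := fun y : Y =>
    t y * (d^-1 + \sum_(x : X | A x y) Num.max ((Amul A t x)^-1 - d^-1) 0) in
  [/\ kappa_feasible A z,
      p_dsu A t = \sum_(y : Y) z y,
      (forall y, phi A t y <= z y)
    & kappa_ldu A t <= p_dsu A t].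
Proof.
move=> [hrow hcol] t0 a0 Xm X0 hsum z.
case: (pickP (fun _ : X => true)) => [x1 _|hX]; last first.
  have nX : X -> False by move=> x; have := hX x.
  have nY : Y -> False by move=> y; case: (hcol y) => x _; exact: nX.
  have eY : forall (F : Y -> R), \sum_(y : Y) F y = 0.
    by move=> F; apply: big1 => y; case: (nY y).
  have eX : forall (F : X -> R), \sum_(x : X) F x = 0.
    by move=> F; apply: big1 => x; case: (nX x).
  have Hp : p_dsu A t = \sum_(y : Y) z y.
    rewrite eY /p_dsu; apply: sup_eqV.
      exists (fun _ => 0); last by rewrite eX.
      split; first by move=> x; rewrite lexx ler01.
      by rewrite eX eY.
    by move=> s [w _ <-]; rewrite eX.
  split.
  - by split => [y|x]; [case: (nY y) | case: (nX x)].
  - exact: Hp.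
  - by move=> y; case: (nY y).
  - by rewrite Hp /kappa_ldu !eY.
have dpos : 0 < d.
  rewrite ltNge; apply/negP => hd.
  have e1 : \sum_(x in Xm) Amul A t x = 0.
    by apply: big1 => x; rewrite inE => h; exfalso; have := a0 x; lra.
  have e2 : \sum_(x in X0) Amul A t x = 0.
    by apply: big1 => x; rewrite inE => /eqP h; exfalso; have := a0 x; lra.
  move: hsum; rewrite e1 e2 addr0 => /andP[h1 h2].
  have st0 : \sum_(y : Y) t y = 0.
    by apply/le_anti; rewrite h2 /=; apply: sumr_ge0 => y _.
  have tz := psumr_eq0P (fun y _ => t0 y) st0.
  have : Amul A t x1 = 0 by apply: big1 => y _; rewrite tz ?mulr0.
  by have := a0 x1; lra.
have zge : forall x y, A x y ->
    t y * (d^-1 + Num.max ((Amul A t x)^-1 - d^-1) 0) <= z y.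
  move=> x y Axy; rewrite /z /=; apply: (ler_wpM2l (t0 y)).
  rewrite lerD2l (bigD1 x) //= lerDl; apply: sumr_ge0 => x' _.
  by rewrite le_max lexx orbT.
have zge' : forall x y, A x y -> t y / Amul A t x <= z y.
  move=> x y Axy; apply: (le_trans _ (zge x y Axy)).
  apply: ler_pM => //; [by rewrite invr_ge0 ltW | exact: u_bound].
have Hfeas : kappa_feasible A z.
  split=> [y|x].
    rewrite /z; apply: mulr_ge0 => //; apply: addr_ge0.
      by rewrite invr_ge0 ltW.
    by apply: sumr_ge0 => x' _; rewrite le_max lexx orbT.
  set c := d^-1 + Num.max ((Amul A t x)^-1 - d^-1) 0.
  have h1 : \sum_(y : Y) (A x y)%:R * (t y * c) <= Amul A z x.
    rewrite /Amul; apply: ler_sum => y _; case Axy: (A x y) => /=.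
      by rewrite !mul1r; exact: zge.
    by rewrite !mul0r.
  apply: le_trans h1.
  have -> : \sum_(y : Y) (A x y)%:R * (t y * c) = Amul A t x * c.
    by rewrite /Amul mulr_suml; apply: eq_bigr => y _; rewrite mulrA.
  rewrite -(mulfV (lt0r_neq0 (a0 x))).
  apply: ler_pM => //; [exact: ltW | by rewrite invr_ge0 ltW | exact: u_bound].
pose im := fun x => ((Amul A t x < d)%R)%:R : R.
pose i0 := fun x => ((Amul A t x == d)%R)%:R : R.
pose V := (\sum_(y : Y) t y) / d + \sum_(x : X) im x * (1 - Amul A t x / d).
have HzV : \sum_(y : Y) z y = V.
  rewrite /z /V.
  under eq_bigr do rewrite mulrDr mulr_sumr.
  rewrite big_split /= -mulr_suml; congr (_ + _).
  under eq_bigr do rewrite big_mkcond /=.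
  rewrite exchange_big /=; apply: eq_bigr => x _.
  rewrite /im -ua_eq // /Amul mulr_sumr; apply: eq_bigr => y _.
  by case: (A x y); rewrite /= ?mul1r ?mul0r ?mulr0 // mulrC.
have eM : \sum_(x in Xm) Amul A t x = \sum_(x : X) im x * Amul A t x.
  rewrite big_mkcond; apply: eq_bigr => x _; rewrite inE /im.
  by case: (Amul A t x < d); rewrite /= ?mul1r ?mul0r.
have e0 : \sum_(x in X0) Amul A t x = \sum_(x : X) i0 x * Amul A t x.
  rewrite big_mkcond; apply: eq_bigr => x _; rewrite inE /i0.
  by case: (Amul A t x == d); rewrite /= ?mul1r ?mul0r.
move: hsum; rewrite eM e0 => /andP[hs1 hs2].
set SM := \sum_(x : X) im x * Amul A t x in hs1 hs2.
set D0 := \sum_(x : X) i0 x * Amul A t x in hs2.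
set T := \sum_(y : Y) t y in hs1 hs2 V HzV.
pose B := T - SM.
have B0 : 0 <= B by rewrite /B subr_ge0.
have BD : B <= D0 by rewrite /B lerBlDl.
have D00 : 0 <= D0.
  by apply: sumr_ge0 => x _; apply: mulr_ge0; [rewrite /i0 ler0n | exact: ltW].
have hf0 : 0 <= B / D0 by apply: divr_ge0.
have hf1 : B / D0 <= 1.
  have [->|Dn0] := eqVneq D0 0; first by rewrite invr0 mulr0 ler01.
  by rewrite ler_pdivrMr ?mul1r // lt_neqAle eq_sym Dn0.
have hBD : B / D0 * D0 <= B.
  have [->|Dn0] := eqVneq D0 0; first by rewrite mulr0.
  by rewrite divfK.
pose N := \sum_(x : X) i0 x.
have DN : D0 = d * N.
  rewrite /D0 /N mulr_sumr; apply: eq_bigr => x _; rewrite /i0.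
  by case: eqP => [->|_]; rewrite /= ?mul1r ?mulr1 ?mul0r ?mulr0.
have N0 : 0 <= N by apply: sumr_ge0 => x _; rewrite /i0 ler0n.
have Hp : p_dsu A t = \sum_(y : Y) z y.
  rewrite HzV /p_dsu; apply: sup_eqV.
    pose w := fun x => im x + i0 x * (B / D0).
    exists w.
      split.
        move=> x; rewrite /w /im /i0.
        case: (boolP (Amul A t x < d)) => h.
          by rewrite (lt_eqF h) /= mul0r addr0 ler01 lexx.
        by case: (Amul A t x == d); rewrite /= add0r ?mul1r ?mul0r ?lexx ?ler01 ?hf0.
      rewrite /w.
      under eq_bigr do rewrite mulrDl.
      rewrite big_split /= -/SM.
      have -> : \sum_(x : X) i0 x * (B / D0) * Amul A t x = B / D0 * D0.
        rewrite /D0 mulr_sumr; apply: eq_bigr => x _; ring.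
      move: hBD; rewrite /B /T; lra.
    rewrite /w big_split /= -mulr_suml -/N.
    rewrite /V; have -> : \sum_(x : X) im x * (1 - Amul A t x / d)
        = \sum_(x : X) im x - SM / d.
      rewrite /SM mulr_suml -sumrB; apply: eq_bigr => x _; ring.
    rewrite DN.
    have [N00|Nn0] := eqVneq N 0.
      have BB : B = 0.
        by apply/le_anti; rewrite B0 andbT; move: BD; rewrite DN N00 mulr0.
      move: BB; rewrite N00 mulr0 invr0 !mulr0 addr0 /B => /eqP.
      rewrite subr_eq0 => /eqP ->; ring.
    rewrite /B; field.
    by rewrite Nn0 gt_eqF.
  move=> s [w [hw hc] <-].
  have hle : \sum_(x : X) w x <= \sum_(x : X)
      (w x * Amul A t x / d + im x * (1 - Amul A t x / d)).
    by apply: ler_sum => x _; exact: term_bound.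
  apply: (le_trans hle); rewrite /V big_split /= -mulr_suml lerD2r.
  by rewrite ler_pM2r ?invr_gt0.
have Hphi : forall y, phi A t y <= z y.
  move=> y; have [x1' Ax1] := hcol y.
  have [x0 Ax0 hmin] := @argmin_ex R X (fun x => A x y) (Amul A t) x1' Ax1.
  have hinf : Amul A t x0 <= inf [set Amul A t x | x in Nbr A y].
    apply: lb_le_inf; first by exists (Amul A t x0); exists x0.
    by move=> r [x Ax <-]; apply: hmin.
  rewrite /phi; apply: (le_trans _ (zge' x0 y Ax0)).
  apply: ler_pM => //.
    by rewrite invr_ge0 (le_trans (ltW (a0 x0)) hinf).
  by rewrite lef_pV2 ?posrE // (lt_le_trans (a0 x0) hinf).
split => //.
by rewrite Hp /kappa_ldu; apply: ler_sum => y _.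
Qed.
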